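(* Let $p$ be a prime and let $R$ be a local nearring which is not a nearfield, whose additive group is $\langle a\rangle+\langle b\rangle\cong C_{p^2}\times C_p$ with $ap^2=0$, $bp=0$, $a+b=b+a$, where $a$ is the identity element of $R$. Then the subgroup $\langle ap\rangle$ is an ideal of $R$.
   Context: A (left) nearring is a set $R$ with operations $+,\cdot$ such that $(R,+)$ is a group, $(R,\cdot)$ a semigroup, and $x(y+z)=xy+xz$ for all $x,y,z$. A nearring with identity is local if its non-invertible elements form a subgroup of $(R,+)$; a nearfield is a nearring with identity in which every nonzero element is invertible. An ideal of $R$ is a normal subgroup $I$ of $(R,+)$ such that $xI\subseteq I$ for all $x\in R$ and $(z+x)y-xy\in I$ for all $x,y\in R$, $z\in I$. Additive notation: $ap$ is $a$ added $p$ times. *)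

(* Defs.v *)
From mathcomp Require Import all_boot all_algebra.
Set Implicit Arguments. Unset Strict Implicit. Unset Printing Implicit Defensive.
Import GRing.Theory.
Local Open Scope ring_scope.

Definition left_nearring (R : zmodType) (mul : R -> R -> R) : Prop :=
  (forall x y z, mul x (mul y z) = mul (mul x y) z) /\
  (forall x y z, mul x (y + z) = mul x y + mul x z).

Definition is_identity (R : zmodType) (mul : R -> R -> R) (e : R) : Prop :=
  forall x, mul e x = x /\ mul x e = x.

Definition invertible (R : zmodType) (mul : R -> R -> R) (e x : R) : Prop :=
  exists y, mul x y = e /\ mul y x = e.

Definition add_subgroup (R : zmodType) (S : R -> Prop) : Prop :=
  S 0 /\ (forall x y, S x -> S y -> S (x - y)).

Definition local_nearring (R : zmodType) (mul : R -> R -> R) (e : R) : Prop :=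
  add_subgroup (fun x => ~ invertible mul e x).

Definition nearfield (R : zmodType) (mul : R -> R -> R) (e : R) : Prop :=
  forall x, x != 0 -> invertible mul e x.

Definition nr_ideal (R : zmodType) (mul : R -> R -> R) (I : R -> Prop) : Prop :=
  add_subgroup I /\
  (forall x z, I z -> I (x + z - x)) /\
  (forall x z, I z -> I (mul x z)) /\
  (forall x y z, I z -> I (mul (z + x) y - mul x y)).

Definition cyc_add (R : zmodType) (g : R) : R -> Prop :=
  fun x => exists k : nat, x = g *+ k.

(* Main.v *)
Require Import Defs.
From mathcomp Require Import all_boot all_algebra.
From mathcomp Require Import all_field.
Import GRing.Theory.
Local Open Scope ring_scope.

Lemma natFp p m n : prime p -> ((m%:R : 'F_p) = n%:R) <-> (m = n %[mod p])%N.
Proof.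
move=> pp; split.
  by move/(congr1 val); rewrite /= !val_Fp_nat.
by move=> h; apply: val_inj; rewrite /= !val_Fp_nat.
Qed.

Lemma natr_Fp p (y : 'F_p) : (val y)%:R = y.
Proof. exact: natr_Zp. Qed.

Lemma Fp_inv_exists p i k : prime p -> ~~ (p %| i)%N ->
  exists m : nat, (i * m = k %[mod p])%N.
Proof.
move=> pp ndv.
have ii0 : (i%:R : 'F_p) != 0.
  apply/eqP=> h; move: ndv; rewrite /dvdn.
  have : (i%:R : 'F_p) = 0%:R by rewrite h.
  by move/(natFp _ _ _ pp) => ->; rewrite mod0n.
exists (val ((i%:R : 'F_p)^-1 * k%:R)).
by apply/(natFp _ _ _ pp); rewrite natrM natr_Fp mulrA mulfV // mul1r.
Qed.

Theorem lemma10 (p : nat) (R : zmodType) (mul : R -> R -> R) (a b : R) :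
  prime p ->
  left_nearring mul ->
  is_identity mul a ->
  local_nearring mul a ->
  ~ nearfield mul a ->
  (* additive group = <a> + <b>, isomorphic to C_{p^2} x C_p *)
  a *+ (p ^ 2) = 0 ->
  b *+ p = 0 ->
  a + b = b + a ->
  (forall x : R, exists i j : nat, x = a *+ i + b *+ j) ->
  (forall i j : nat, a *+ i + b *+ j = 0 -> ((p ^ 2 %| i) && (p %| j))%N) ->
  nr_ideal mul (cyc_add (a *+ p)).
Proof.
move=> pp [massoc mdist] hid _ _ hap hbp _ hdec hind.
have p_gt0 : (0 < p)%N := prime_gt0 pp.
have m0 : forall x, mul x 0 = 0.
  move=> x; have h := mdist x 0 0; rewrite addr0 in h.
  by apply: (addrI (mul x 0)); rewrite addr0 -h.
have mn : forall x y n, mul x (y *+ n) = (mul x y) *+ n.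
  move=> x y; elim=> [|n IH]; first by rewrite !mulr0n m0.
  by rewrite !mulrS mdist IH.
have ma : forall x n, mul x (a *+ n) = x *+ n.
  by move=> x n; rewrite mn (proj2 (hid x)).
set e := a *+ p.
have ep0 : e *+ p = 0 by rewrite /e -mulrnA mulnn.
pose I := fun x => exists k, x = e *+ k.
have Iadd : forall x y, I x -> I y -> I (x + y).
  by move=> x y [k ->] [l ->]; exists (k + l)%N; rewrite mulrnDr.
have Imul : forall x n, I x -> I (x *+ n).
  by move=> x n [k ->]; exists (k * n)%N; rewrite mulrnA.
have Ineg : forall x, I x -> I (- x).
  move=> x [k ->]; exists (k * (p - 1))%N.
  apply: (addrI (e *+ k)); rewrite subrr -mulrnDr.
  have -> : (k + k * (p - 1) = p * k)%N.
    by rewrite mulnBr muln1 subnKC ?leq_pmulr // mulnC.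
  by rewrite mulrnA ep0 mul0rn.
have Isub : forall x y, I x -> I y -> I (x - y).
  by move=> x y Ix Iy; apply: Iadd => //; apply: Ineg.
have bmod : forall n, b *+ n = b *+ (n %% p).
  move=> n; rewrite {1}(divn_eq n p) mulrnDr mulnC mulrnA hbp mul0rn.
  by rewrite add0r.
have emod : forall n, e *+ n = e *+ (n %% p).
  move=> n; rewrite {1}(divn_eq n p) mulrnDr mulnC mulrnA ep0 mul0rn.
  by rewrite add0r.
have wb : forall w, (mul w b) *+ p = 0 by move=> w; rewrite -mn hbp m0.
have we : forall w k, mul w (e *+ k) = (w *+ p) *+ k.
  by move=> w k; rewrite mn ma.
have omega_form : forall w, w *+ p = 0 -> exists q j, w = e *+ q + b *+ j.
  move=> w wp; have [i [j Ew]] := hdec w.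
  have h : a *+ (i * p) + b *+ 0 = 0.
    by rewrite mulr0n addr0 -wp Ew mulrnDl [b *+ j *+ p]mulrnAC hbp mul0rn addr0 mulrnA.
  have /andP[d _] := hind _ _ h.
  have dpi : (p %| i)%N by rewrite -(@dvdn_pmul2r p) // mulnn.
  exists (i %/ p)%N, j; rewrite Ew /e -mulrnA.
  by rewrite mulnC divnK.
have omega_p : forall q j, (e *+ q + b *+ j) *+ p = 0.
  by move=> q j; rewrite mulrnDl [e *+ q *+ p]mulrnAC ep0 mul0rn [b *+ j *+ p]mulrnAC hbp mul0rn add0r.
have xpe : forall i j, (a *+ i + b *+ j) *+ p = e *+ i.
  by move=> i j; rewrite mulrnDl [b *+ j *+ p]mulrnAC hbp mul0rn addr0 /e mulrnAC.
have coordj : forall i j i' j', a *+ i + b *+ j = a *+ i' + b *+ j' ->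
    (j = j' %[mod p])%N.
  move=> i j i' j' E.
  have [i2 [j2 H]] := hdec (- (a *+ i' + b *+ j')).
  have h1 : a *+ (i + i2) + b *+ (j + j2) = 0.
    by rewrite !mulrnDr addrACA -H E subrr.
  have h2 : a *+ (i' + i2) + b *+ (j' + j2) = 0.
    by rewrite !mulrnDr addrACA -H subrr.
  have /andP[_ d1] := hind _ _ h1.
  have /andP[_ d2] := hind _ _ h2.
  apply/eqP; rewrite -(eqn_modDr j2); apply/eqP.
  by move: d1 d2; rewrite /dvdn => /eqP -> /eqP ->.
have ecoord : forall q j q' j', e *+ q + b *+ j = e *+ q' + b *+ j' ->
    (j = j' %[mod p])%N.
  by move=> q j q' j'; rewrite /e -!mulrnA; apply: coordj.
have hprod : forall u v k g, u *+ p = 0 -> mul v b = e *+ k + b *+ g ->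
    mul (mul u v) b = (mul u b) *+ g.
  move=> u v k g up E.
  by rewrite -massoc E mdist we up mul0rn add0r mn.
have U : forall m, exists t, mul (a + e *+ m) b = b + e *+ t.
  move=> m; set u := a + e *+ m.
  have [k0 [g E0]] := omega_form _ (wb u).
  have up : u *+ p = e by rewrite /u mulrnDl [e *+ m *+ p]mulrnAC ep0 mul0rn addr0.
  pose v n := a + e *+ (m * n).
  have uv : forall n, mul u (v n) = v n.+1.
    move=> n; rewrite /v mdist (proj2 (hid u)) we up /u -addrA -mulrnDr.
    by rewrite mulnS.
  have ind : forall n, exists c, mul (v n) b = e *+ c + b *+ (g ^ n).
    elim=> [|n [c IH]].
      exists 0%N; rewrite /v muln0 !mulr0n addr0 add0r expn0 mulr1n.
      exact: (proj1 (hid b)).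
    exists (c + k0 * g ^ n)%N.
    rewrite -uv -massoc IH mdist we up mn E0 mulrnDl mulrnDr -!mulrnA.
    by rewrite addrA expnS.
  have [c Hc] := ind p.
  have vp : v p = a by rewrite /v mulnC mulrnA ep0 mul0rn addr0.
  rewrite vp (proj1 (hid b)) in Hc.
  have h1 : (1 = g ^ p %[mod p])%N.
    by apply: (ecoord 0%N 1%N c); rewrite mulr0n add0r mulr1n.
  have hg : (g = 1 %[mod p])%N.
    apply/(natFp _ _ _ pp).
    have := (natFp _ _ _ pp).2 h1; rewrite natrX => h.
    have := expf_card (g%:R : 'F_p); rewrite card_Fp // => <-.
    by rewrite -h.
  exists k0; rewrite E0 bmod hg -bmod mulr1n addrC //.
have KEY : forall x z, I z -> I (mul (z + x) b - mul x b).
  move=> x z [k ->]; have [i [j Ex]] := hdec x.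
  case: (boolP (p %| i)%N) => hpi.
  - have [q Eq] : exists q, x = e *+ q + b *+ j.
      by exists (i %/ p)%N; rewrite Ex /e -mulrnA mulnC divnK.
    set r := x; set s := e *+ k + r.
    have rp : r *+ p = 0 by rewrite /r Eq omega_p.
    have sp : s *+ p = 0.
      by rewrite /s mulrnDl rp addr0 [e *+ k *+ p]mulrnAC ep0 mul0rn.
    have rs : mul r s = mul r r.
      by rewrite /s mdist we rp mul0rn add0r.
    have sr : mul s r = mul s s.
      by rewrite {2}/s mdist we sp mul0rn add0r.
    have [k1 [g1 E1]] := omega_form _ (wb r).
    have [k2 [g2 E2]] := omega_form _ (wb s).
    have c1 := hprod r s _ _ rp E2.
    have c2 := hprod r r _ _ rp E1.
    have c3 := hprod s r _ _ sp E1.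
    have c4 := hprod s s _ _ sp E2.
    have ex : forall k g n, (e *+ k + b *+ g) *+ n = e *+ (k * n) + b *+ (g * n).
      by move=> k' g' n; rewrite mulrnDl -!mulrnA.
    have h1 : (g1 * g2 = g1 * g1 %[mod p])%N.
      apply: (ecoord (k1 * g2) _ (k1 * g1)); rewrite -!ex -E1 -c1 -c2 rs //.
    have h2 : (g2 * g1 = g2 * g2 %[mod p])%N.
      apply: (ecoord (k2 * g1) _ (k2 * g2)); rewrite -!ex -E2 -c3 -c4 sr //.
    have hg : (g1 = g2 %[mod p])%N.
      apply/(natFp _ _ _ pp).
      move: h1 h2 => /(natFp _ _ _ pp) h1 /(natFp _ _ _ pp) h2.
      rewrite !natrM in h1 h2.
      set X := (g1%:R : 'F_p) in h1 h2 *; set Y := (g2%:R : 'F_p) in h1 h2 *.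
      have : (X - Y) * (X - Y) = 0.
        by rewrite mulrBl !mulrBr -h1 -h2 !subrr.
      by move/eqP; rewrite mulf_eq0 orbb subr_eq0 => /eqP.
    rewrite -/s E1 E2 (bmod g1) hg -(bmod g2) opprD addrACA subrr addr0.
    by apply: Isub; [exists k2 | exists k1].
  - have [m hm] := Fp_inv_exists _ _ k pp hpi.
    set u := a + e *+ m.
    have xu : mul x u = e *+ k + x.
      rewrite /u mdist (proj2 (hid x)) we {2}Ex xpe -mulrnA (emod (i * m)) hm -(emod k).
      by rewrite addrC.
    have [t Ht] := U m.
    rewrite -xu -massoc -/u Ht mdist we addrAC subrr add0r.
    by apply: Imul; rewrite Ex xpe; exists i.
split.
  split; first by exists 0%N; rewrite mulr0n.
  by move=> x y Ix Iy; apply: Isub.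
split.
  by move=> x z Iz; rewrite (addrC x) addrK.
split.
  move=> x z [k ->]; rewrite we; apply: Imul.
  by have [i [j ->]] := hdec x; rewrite xpe; exists i.
move=> x y z Iz.
have [i [j ->]] := hdec y.
rewrite !mdist !ma !mn mulrnDl opprD addrACA addrK.
apply: Iadd; first by apply: Imul.
rewrite -mulrnBl; apply: Imul; exact: KEY.
Qed.
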